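(* For every $\lambda>0$, $\mathrm{KD}_\lambda$ is a metric on $V$: for all $x,y,z\in V$, (1) $\mathrm{KD}_\lambda(x,y)=0$ if and only if $x=y$; (2) $\mathrm{KD}_\lambda(x,y)=\mathrm{KD}_\lambda(y,x)$; (3) $\mathrm{KD}_\lambda(x,z)\le\mathrm{KD}_\lambda(x,y)+\mathrm{KD}_\lambda(y,z)$.
   Context: Let $H=(V,E,w)$ be a weighted hypergraph: $V$ is a finite set, $E$ a set of nonempty subsets of $V$, $w\colon E\to\mathbb{R}_{>0}$. Write $x\sim y$ if some $e\in E$ contains both; $H$ is assumed connected. The degree is $d_x=\sum_{e\ni x}w_e>0$, $D=\mathrm{diag}(d_x)$. The distance $d(x,y)$ is the minimal $n$ with a chain $x=z_0\sim\cdots\sim z_n=y$. $\delta_x$ is the indicator of $x$. $\mathbb{R}^V$ carries the inner product $\langle f,g\rangle=\sum_x f(x)g(x)/d_x$ with norm $\|\cdot\|$. For $e\in E$ let $B_e=\mathrm{Conv}\{\delta_x-\delta_y : x,y\in e\}$. The multivalued hypergraph Laplacian is $L(f)=\{\sum_{e}w_e\mathtt{b}_e(\mathtt{b}_e^\top f) : \mathtt{b}_e\in\operatorname{argmax}_{\mathtt b\in B_e}\mathtt b^\top f\}$ and the normalized Laplacian is $\mathcal{L}f=L(D^{-1}f)$, a maximal monotone operator on $(\mathbb{R}^V,\langle\cdot,\cdot\rangle)$. For $\lambda>0$ the resolvent $J_\lambda=(I+\lambda\mathcal L)^{-1}$ is a single-valued map $\mathbb{R}^V\to\mathbb{R}^V$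 (equivalently $J_\lambda f=\operatorname{argmin}_g\{\frac{1}{2\lambda}\|f-g\|^2+Q(D^{-1}g)\}$, $Q(g)=\frac12\sum_e w_e\max_{x,y\in e}(g(x)-g(y))^2$). A function $f$ is weighted $1$-Lipschitz if $|f(x)/d_x-f(y)/d_y|\le d(x,y)$ for all $x,y$; $\mathrm{Lip}^1_w(V)$ denotes the set of such functions. $\mathrm{KD}_\lambda(x,y)=\sup\{\langle J_\lambda f,\delta_x-\delta_y\rangle : f\in\mathrm{Lip}^1_w(V)\}$. *)

(* Defs.v *)
From HB Require Import structures.
From mathcomp Require Import all_boot all_order all_algebra.
From mathcomp Require Import all_classical all_reals.
From mathcomp Require Import ereal.
Set Implicit Arguments. Unset Strict Implicit. Unset Printing Implicit Defensive.
Import Order.TTheory GRing.Theory Num.Theory.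
Local Open Scope ring_scope.
Local Open Scope classical_set_scope.

Section Hypergraph.
Variables (R : realType) (V : finType) (E : {set {set V}}) (w : {set V} -> R).

Definition hadj (x y : V) : bool := [exists e in E, (x \in e) && (y \in e)].

Definition hchain (n : nat) (x y : V) : bool :=
  [exists s : n.-tuple V, path hadj x s && (last x s == y)].

Definition hconnected : Prop := forall x y : V, exists n, hchain n x y.

(* d(x,y) = minimal n with a chain of length n from x to y (0 if none) *)
Definition hdist (x y : V) : nat :=
  match pselect (exists n, hchain n x y) with
  | left P => ex_minn P
  | right _ => 0%N
  end.

Definition deg (x : V) : R := \sum_(e in E | x \in e) w e.

Definition delta (x : V) : V -> R := fun z => (z == x)%:R.

Definition winner (f g : V -> R) : R := \sum_x f x * g x / deg x.

Definition dotp (b f : V -> R) : R := \sum_x b x * f x.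

(* B_e = Conv { delta_x - delta_y : x, y in e } *)
Definition Bset (e : {set V}) : set (V -> R) :=
  [set b | exists c : V -> V -> R,
     [/\ forall x y, 0 <= c x y,
         forall x y, c x y != 0 -> (x \in e) && (y \in e),
         \sum_x \sum_y c x y = 1
       & b = fun z => \sum_x \sum_y c x y * (delta x z - delta y z)]].

Definition Bargmax (e : {set V}) (f : V -> R) : set (V -> R) :=
  [set b | Bset e b /\ forall b', Bset e b' -> dotp b' f <= dotp b f].

Definition hLap (f : V -> R) : set (V -> R) :=
  [set v | exists b : {set V} -> (V -> R),
     (forall e, e \in E -> Bargmax e f (b e)) /\
     v = fun z => \sum_(e in E) w e * b e z * dotp (b e) f].

Definition Dinv (f : V -> R) : V -> R := fun x => f x / deg x.

Definition nLap (f : V -> R) : set (V -> R) := hLap (Dinv f).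

Definition resolvent_rel (lam : R) (f g : V -> R) : Prop :=
  exists v, nLap g v /\ f = fun z => g z + lam * v z.

(* the resolvent J_lambda = (I + lambda calL)^{-1} (single-valued) *)
Definition resolvent (lam : R) (f : V -> R) : V -> R :=
  xget (fun _ => 0) [set g | resolvent_rel lam f g].

Definition wLip1 : set (V -> R) :=
  [set f | forall x y, `|f x / deg x - f y / deg y| <= (hdist x y)%:R].

Definition KD (lam : R) (x y : V) : \bar R :=
  ereal_sup [set (winner (resolvent lam f) (fun z => delta x z - delta y z))%:E
            | f in wLip1].

End Hypergraph.

(* Main.v *)
Require Import Defs.
From HB Require Import structures.
From mathcomp Require Import all_boot all_order all_algebra.
From mathcomp Require Import all_classical all_reals.
From mathcomp Require Import ereal.
From mathcomp Require Import lra.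
Import Order.TTheory GRing.Theory Num.Theory.
Local Open Scope ring_scope.

Lemma sum_delta {R : realType} {V : finType} (x : V) (f : V -> R) :
  \sum_z delta R x z * f z = f x.
Proof.
rewrite (bigD1 x) //= /delta eqxx mul1r big1 ?addr0 // => z /negbTE ->.
by rewrite mul0r.
Qed.

Lemma sum_delta' {R : realType} {V : finType} (x : V) (f : V -> R) :
  \sum_z f z * delta R x z = f x.
Proof. by rewrite -(sum_delta x f); apply: eq_bigr => z _; rewrite mulrC. Qed.

Lemma dotp_B {R : realType} {V : finType} (c : V -> V -> R) (f : V -> R) :
  dotp (fun z => \sum_x \sum_y c x y * (delta R x z - delta R y z)) f =
  \sum_x \sum_y c x y * (f x - f y).
Proof.
rewrite /dotp.
transitivity (\sum_z \sum_x \sum_y c x y * (delta R x z - delta R y z) * f z).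
  by apply: eq_bigr => z _; rewrite mulr_suml; apply: eq_bigr => x _; rewrite mulr_suml.
rewrite exchange_big; apply: eq_bigr => x _.
rewrite exchange_big; apply: eq_bigr => y _.
rewrite -[in RHS](sum_delta x f) -[in RHS](sum_delta y f) -sumrB mulr_sumr.
by apply: eq_bigr => z _; rewrite mulrBr !mulrBl mulrBr !mulrA.
Qed.

Lemma sum_pair_delta {R : realType} {V : finType} (a b : V) (G : V -> V -> R) :
  \sum_x \sum_y ((x == a) && (y == b))%:R * G x y = G a b.
Proof.
rewrite (bigD1 a) //=.
rewrite [X in _ + X]big1 ?addr0; last first.
  move=> x /negbTE Hx; apply: big1 => y _; by rewrite Hx mul0r.
rewrite (bigD1 b) //= !eqxx mul1r big1 ?addr0 // => y /negbTE ->.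
by rewrite mul0r.
Qed.

Lemma Bset_point {R : realType} {V : finType} {e : {set V}} {a b : V} :
  a \in e -> b \in e ->
  Bset e (fun z : V => \sum_x \sum_y ((x == a) && (y == b))%:R * (delta R x z - delta R y z) : R).
Proof.
move=> Ha Hb; exists (fun x y => ((x == a) && (y == b))%:R); split => //.
- move=> x y; case: (x =P a) => [->|]; case: (y =P b) => [->|] //=; by rewrite ?Ha ?Hb ?eqxx.
- rewrite -[RHS](sum_pair_delta a b (fun _ _ => 1)); by apply: eq_bigr => x _; apply: eq_bigr => y _; rewrite mulr1.
Qed.

Lemma dotp_Bset_le {R : realType} {V : finType} {e : {set V}} {b : V -> R} {f : V -> R} {M : R} :
  Bset e b -> (forall x y, x \in e -> y \in e -> f x - f y <= M) -> dotp b f <= M.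
Proof.
move=> [c [c0 cin c1 ->]] HM; rewrite dotp_B.
rewrite -[leRHS]mul1r -c1 mulr_suml; apply: ler_sum => x _.
rewrite mulr_suml; apply: ler_sum => y _.
have [Hc|Hc] := eqVneq (c x y) 0; first by rewrite Hc !mul0r.
move/andP: (cin _ _ Hc) => [Hx Hy].
by apply: ler_wpM2l => //; apply: HM.
Qed.

Lemma Bset_opp {R : realType} {V : finType} {e : {set V}} {b : V -> R} :
  Bset e b -> Bset e (fun z => - b z).
Proof.
move=> [c [c0 cin c1 ->]]; exists (fun x y => c y x); split => //.
- by move=> x y /cin /andP[-> ->].
- by rewrite exchange_big.
- apply: funext => z /=; rewrite -sumrN exchange_big; apply: eq_bigr => x _.
  rewrite -sumrN; apply: eq_bigr => y _; by rewrite -mulrN opprB.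
Qed.

Lemma zero_in_argmax_ge {R : realType} {V : finType} {e : {set V}} {b : V -> R} {f} :
  e != finset.set0 -> Bargmax e f b -> 0 <= dotp b f.
Proof.
move=> /set0Pn [a Ha] [_ Hmax].
have := Hmax _ (Bset_point (R:=R) Ha Ha); rewrite dotp_B sum_pair_delta subrr; exact.
Qed.

Lemma argmax_exists {R : realType} {V : finType} (e : {set V}) (f : V -> R) :
  e != finset.set0 -> exists b, Bargmax e f b.
Proof.
move=> /set0Pn [a0 Ha0].
case: (@arg_maxP _ _ V a0 (mem e) f Ha0) => a Ha Hmax.
case: (@arg_minP _ _ V a0 (mem e) f Ha0) => b Hb Hmin.
exists (fun z : V => \sum_x \sum_y ((x == a) && (y == b))%:R * (delta R x z - delta R y z)).
split; first exact: Bset_point.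
move=> b' Hb'; rewrite dotp_B sum_pair_delta.
apply: (dotp_Bset_le Hb') => x y Hx Hy.
by apply: lerB; [apply: Hmax | apply: Hmin].
Qed.

Lemma dotpZ {R : realType} {V : finType} (b f : V -> R) (t : R) :
  dotp b (fun z => t * f z) = t * dotp b f.
Proof. rewrite /dotp mulr_sumr; apply: eq_bigr => z _; by rewrite mulrCA. Qed.

Lemma dotpN {R : realType} {V : finType} (b f : V -> R) :
  dotp (fun z => - b z) (fun z => - f z) = dotp b f.
Proof. apply: eq_bigr => z _; by rewrite mulrNN. Qed.

Lemma dotpNl {R : realType} {V : finType} (b f : V -> R) :
  dotp (fun z => - b z) f = - dotp b f.
Proof. rewrite /dotp -sumrN; apply: eq_bigr => z _; by rewrite mulNr. Qed.

Lemma lap_sum {R : realType} {V : finType} (E : {set {set V}}) (w : {set V} -> R)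
  (b : {set V} -> V -> R) (h k : V -> R) :
  \sum_z (\sum_(e in E) w e * b e z * dotp (b e) h) * k z =
  \sum_(e in E) w e * dotp (b e) h * dotp (b e) k.
Proof.
under eq_bigr do rewrite mulr_suml.
rewrite exchange_big; apply: eq_bigr => e _.
rewrite /dotp [in RHS]mulr_sumr; apply: eq_bigr => z _.
by rewrite -!mulrA; congr (_ * _); rewrite mulrCA mulrA.
Qed.

Lemma lap_mono {R : realType} {V : finType} (E : {set {set V}}) (w : {set V} -> R)
  (hE : forall e, e \in E -> e != finset.set0)
  (hw : forall e, e \in E -> 0 < w e) (h1 h2 v1 v2 : V -> R) :
  hLap E w h1 v1 -> hLap E w h2 v2 ->
  0 <= \sum_z (v1 z - v2 z) * (h1 z - h2 z).
Proof.
move=> [b1 [Hb1 ->]] [b2 [Hb2 ->]].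
under eq_bigr do rewrite mulrBl.
rewrite sumrB !lap_sum -sumrB; apply: sumr_ge0 => e He.
rewrite -!mulrA -mulrBr; apply: mulr_ge0; first exact: ltW (hw _ He).
have [B1 M1] := Hb1 _ He; have [B2 M2] := Hb2 _ He.
have a1 := zero_in_argmax_ge (hE _ He) (Hb1 _ He).
have a2 := zero_in_argmax_ge (hE _ He) (Hb2 _ He).
have p := M2 _ B1; have q := M1 _ B2.
have -> : dotp (b1 e) (fun z => h1 z - h2 z) = dotp (b1 e) h1 - dotp (b1 e) h2.
  by rewrite /dotp -sumrB; apply: eq_bigr => z _; rewrite mulrBr.
have -> : dotp (b2 e) (fun z => h1 z - h2 z) = dotp (b2 e) h1 - dotp (b2 e) h2.
  by rewrite /dotp -sumrB; apply: eq_bigr => z _; rewrite mulrBr.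
move: a1 a2 p q.
set A := dotp (b1 e) h1; set C := dotp (b2 e) h2.
set P := dotp (b1 e) h2; set Q := dotp (b2 e) h1 => a1 a2 p q.
have : A * P <= A * C by apply: ler_wpM2l.
have : C * Q <= C * A by apply: ler_wpM2l.
have := sqr_ge0 (A - C). clearbody A C P Q. move=> H1 H2 H3. nra.
Qed.

Lemma resolvent_uniq {R : realType} {V : finType} (E : {set {set V}}) (w : {set V} -> R)
  (hE : forall e, e \in E -> e != finset.set0)
  (hw : forall e, e \in E -> 0 < w e)
  (hdeg : forall x, 0 < deg E w x) (lam : R) (hlam : 0 < lam) (f g1 g2 : V -> R) :
  resolvent_rel E w lam f g1 -> resolvent_rel E w lam f g2 -> g1 = g2.
Proof.
move=> [v1 [Hv1 Hf1]] [v2 [Hv2 Hf2]].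
have Hd z : g1 z - g2 z = lam * (v2 z - v1 z).
  have := congr1 (fun F => F z) Hf1; rewrite Hf2 /= => H.
  rewrite mulrBr; lra.
have Hm := lap_mono _ _ hE hw _ _ _ _ Hv1 Hv2.
have Hterm z : (g1 z - g2 z) * (Dinv E w g1 z - Dinv E w g2 z) = (g1 z - g2 z) ^+ 2 / deg E w z.
  by rewrite /Dinv -mulrBl mulrA expr2.
have Hpos z : 0 <= (g1 z - g2 z) ^+ 2 / deg E w z.
  by apply: divr_ge0; [apply: sqr_ge0 | apply: ltW].
have HS : \sum_z (g1 z - g2 z) * (Dinv E w g1 z - Dinv E w g2 z) =
          - lam * \sum_z (v1 z - v2 z) * (Dinv E w g1 z - Dinv E w g2 z).
  rewrite mulr_sumr; apply: eq_bigr => z _; rewrite Hd mulrA; congr (_ * _).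
  by rewrite mulNr -mulrN opprB.
have HS0 : \sum_z (g1 z - g2 z) ^+ 2 / deg E w z = 0.
  apply/eqP; rewrite eq_le; apply/andP; split; last by apply: sumr_ge0.
  under eq_bigr do rewrite -Hterm.
  rewrite HS mulNr oppr_le0; apply: mulr_ge0 => //; exact: ltW.
apply: funext => z.
have := psumr_eq0P (fun i _ => Hpos i) HS0 (i:=z) isT.
move/eqP; rewrite mulf_eq0 invr_eq0 (gt_eqF (hdeg z)) orbF sqrf_eq0 subr_eq0.
by move/eqP.
Qed.

Lemma resolvent_eq {R : realType} {V : finType} (E : {set {set V}}) (w : {set V} -> R)
  (hE : forall e, e \in E -> e != finset.set0)
  (hw : forall e, e \in E -> 0 < w e)
  (hdeg : forall x, 0 < deg E w x) (lam : R) (hlam : 0 < lam) (f g : V -> R) :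
  resolvent_rel E w lam f g -> resolvent E w lam f = g.
Proof.
move=> H; rewrite /resolvent; case: xgetP => [y -> Hy|Hn].
  exact: (resolvent_uniq _ _ hE hw hdeg _ hlam _ _ _ Hy H).
by case: (Hn g).
Qed.

Lemma rel_opp {R : realType} {V : finType} {E : {set {set V}}} {w : {set V} -> R}
  {lam : R} {f g : V -> R} :
  resolvent_rel E w lam f g -> resolvent_rel E w lam (fun z => - f z) (fun z => - g z).
Proof.
move=> [v [[b [Hb Hv]] Hf]].
exists (fun z => - v z); split; last first.
  by apply: funext => z; rewrite Hf /= opprD mulrN.
exists (fun e z => - b e z); split.
  move=> e He; have [B M] := Hb e He; split; first exact: Bset_opp.
  move=> b' Hb'.
  have -> : Dinv E w (fun z => - g z) = fun z => - Dinv E w g z.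
    by apply: funext => z; rewrite /Dinv mulNr.
  rewrite dotpN -[b']/(fun z => b' z) .
  have := M _ (Bset_opp Hb'); rewrite dotpNl.
  have -> : dotp b' (fun z => - Dinv E w g z) = - dotp b' (Dinv E w g).
    by rewrite /dotp -sumrN; apply: eq_bigr => z _; rewrite mulrN.
  by rewrite lerNl.
apply: funext => z; rewrite Hv -sumrN; apply: eq_bigr => e _.
have -> : Dinv E w (fun z => - g z) = fun z => - Dinv E w g z.
  by apply: funext => y; rewrite /Dinv mulNr.
by rewrite dotpN mulrN mulNr.
Qed.

Lemma rel_scale {R : realType} {V : finType} {E : {set {set V}}} {w : {set V} -> R}
  {lam t : R} (ht : 0 <= t) {f g : V -> R} :
  resolvent_rel E w lam f g -> resolvent_rel E w lam (fun z => t * f z) (fun z => t * g z).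
Proof.
move=> [v [[b [Hb Hv]] Hf]].
have HD : Dinv E w (fun z => t * g z) = fun z => t * Dinv E w g z.
  by apply: funext => y; rewrite /Dinv mulrA.
exists (fun z => t * v z); split; last first.
  by apply: funext => z; rewrite Hf /= mulrDr mulrCA.
exists b; split.
  move=> e He; have [B M] := Hb e He; split => // b' Hb'.
  rewrite /nLap HD !dotpZ; apply: ler_wpM2l => //; exact: M.
apply: funext => z; rewrite /nLap HD Hv mulr_sumr; apply: eq_bigr => e _.
by rewrite dotpZ mulrCA.
Qed.

Lemma resolvent_opp {R : realType} {V : finType} (E : {set {set V}}) (w : {set V} -> R)
  (hE : forall e, e \in E -> e != finset.set0)
  (hw : forall e, e \in E -> 0 < w e)
  (hdeg : forall x, 0 < deg E w x) (lam : R) (hlam : 0 < lam) (f : V -> R) :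
  resolvent E w lam (fun z => - f z) = fun z => - resolvent E w lam f z.
Proof.
case: (pselect (exists g, resolvent_rel E w lam f g)) => [[g Hg]|Hn].
  rewrite (resolvent_eq _ _ hE hw hdeg _ hlam _ _ Hg).
  exact: (resolvent_eq _ _ hE hw hdeg _ hlam _ _ (rel_opp Hg)).
rewrite /resolvent; case: xgetP => [y _ Hy|_].
  case: Hn; exists (fun z => - y z).
  have := rel_opp Hy; congr resolvent_rel; apply: funext => z; by rewrite opprK.
case: xgetP => [y _ Hy|_]; first by case: Hn; exists y.
by apply: funext => z; rewrite oppr0.
Qed.

Lemma lap_exists {R : realType} {V : finType} (E : {set {set V}}) (w : {set V} -> R)
  (hE : forall e, e \in E -> e != finset.set0) (h : V -> R) :
  exists v, hLap E w h v.
Proof.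
have H : forall e : {set V}, exists b : V -> R, e \in E -> Bargmax e h b.
  move=> e; case: (boolP (e \in E)) => He.
    by have [b Hb] := argmax_exists e h (hE e He); exists b.
  by exists (fun _ => 0).
have [b Hb] := choice H.
by exists (fun z => \sum_(e in E) w e * b e z * dotp (b e) h); exists b.
Qed.

Lemma hdist_ge1 {V : finType} (E : {set {set V}}) (hconn : hconnected E) (u v : V) :
  u != v -> (1 <= hdist E u v)%N.
Proof.
move=> Huv; rewrite /hdist; case: pselect => [P|nP]; last by case: nP; apply: hconn.
case: ex_minnP => n Hn _; rewrite lt0n; apply/negP => /eqP Hn0.
move: Hn; rewrite Hn0 /hchain => /existsP [s /andP [_ Hl]].
by move: Hl; rewrite (tuple0 s) /= => /eqP Huv'; rewrite Huv' eqxx in Huv.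
Qed.

Lemma wLip1_opp {R : realType} {V : finType} (E : {set {set V}}) (w : {set V} -> R) (f : V -> R) :
  wLip1 E w f -> wLip1 E w (fun z => - f z).
Proof. move=> H x y; by rewrite !mulNr -opprD normrN. Qed.

Lemma winner_opp {R : realType} {V : finType} (E : {set {set V}}) (w : {set V} -> R) (g : V -> R) (x y : V) :
  winner E w (fun z => - g z) (fun z => delta R y z - delta R x z) =
  winner E w g (fun z => delta R x z - delta R y z).
Proof. apply: eq_bigr => z _; by rewrite -opprB mulrNN. Qed.

Lemma winner_split {R : realType} {V : finType} (E : {set {set V}}) (w : {set V} -> R) (g : V -> R) (x y z : V) :
  winner E w g (fun t => delta R x t - delta R z t) =
  winner E w g (fun t => delta R x t - delta R y t) + winner E w g (fun t => delta R y t - delta R z t).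
Proof.
rewrite /winner -big_split; apply: eq_bigr => t _ /=.
by rewrite -mulrDl -mulrDr addrA subrK.
Qed.

Lemma term_le_sum {R : realType} {V : finType} (F : V -> R) (u : V) :
  `|F u| <= \sum_z `|F z|.
Proof. rewrite (bigD1 u) //= lerDl; apply: sumr_ge0 => z _; exact: normr_ge0. Qed.

Lemma KD_pos {R : realType} {V : finType} (E : {set {set V}}) (w : {set V} -> R)
  (hE : forall e, e \in E -> e != finset.set0)
  (hw : forall e, e \in E -> 0 < w e)
  (hconn : hconnected E)
  (hdeg : forall x, 0 < deg E w x) (lam : R) (hlam : 0 < lam) (x y : V) :
  x != y -> exists2 t : R, 0 < t & (t%:E <= KD E w lam x y)%E.
Proof.
move=> Hxy.
pose g1 := fun z => deg E w z * delta R x z.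
have [v Hv] := lap_exists E w hE (Dinv E w g1).
pose f1 := fun z => g1 z + lam * v z.
have Hrel : resolvent_rel E w lam f1 g1 by exists v.
pose S := \sum_z `|f1 z / deg E w z|.
have S0 : 0 <= S by apply: sumr_ge0 => z _; exact: normr_ge0.
pose M := 1 + S + S.
have M0 : 0 < M by rewrite /M; lra.
pose t := M^-1.
have t0 : 0 < t by rewrite invr_gt0.
have Hrel0 := rel_scale (ltW t0) Hrel.
have HJ := resolvent_eq _ _ hE hw hdeg _ hlam _ _ Hrel0.
exists t => //.
apply: ereal_sup_ubound; exists (fun z => t * f1 z).
  move=> u u'; case: (eqVneq u u') => [->|Huu].
    by rewrite subrr normr0 ler0n.
  apply: (@le_trans _ _ 1); last by rewrite ler1n; exact: hdist_ge1.
  rewrite -!mulrA -mulrBr normrM (gtr0_norm t0) mulrC ler_pdivrMr // mul1r.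
  apply: (le_trans (ler_normB _ _)).
  have := term_le_sum (fun z => f1 z / deg E w z) u.
  have := term_le_sum (fun z => f1 z / deg E w z) u'.
  rewrite -/S /M; lra.
rewrite HJ /winner (bigD1 x) //= big1 ?addr0.
  rewrite /g1 /delta eqxx (negbTE Hxy) subr0 !mulr1; congr (_%:E).
  by rewrite -mulrA divff ?mulr1 // gt_eqF.
move=> z Hz; by rewrite /g1 /delta (negbTE Hz) !mulr0 !mul0r.
Qed.

Theorem mainTheorem6 (R : realType) (V : finType) (E : {set {set V}})
  (w : {set V} -> R)
  (hE : forall e, e \in E -> e != finset.set0)
  (hw : forall e, e \in E -> 0 < w e)
  (hconn : hconnected E)
  (hdeg : forall x, 0 < deg E w x)
  (lam : R) (hlam : 0 < lam) :
  [/\ forall x y : V, KD E w lam x y = (0 : R)%:E <-> x = y,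
      forall x y : V, KD E w lam x y = KD E w lam y x
    & forall x y z : V, (KD E w lam x z <= KD E w lam x y + KD E w lam y z)%E].
Proof.
have Hsym : forall x y, (KD E w lam x y <= KD E w lam y x)%E.
  move=> x y; apply: ge_ereal_sup => _ [f Hf <-].
  apply: ereal_sup_ubound; exists (fun z => - f z); first exact: wLip1_opp.
  by rewrite (resolvent_opp _ _ hE hw hdeg _ hlam) winner_opp.
split.
- move=> x y; split; last first.
    move=> <-; apply/eqP; rewrite eq_le; apply/andP; split.
      apply: ge_ereal_sup => _ [f Hf <-]; rewrite lee_fin.
      rewrite /winner big1 // => z _; by rewrite subrr mulr0 mul0r.
    apply: ereal_sup_ubound; exists (fun _ => 0).
      by move=> u u'; rewrite !mul0r subrr normr0 ler0n.
    rewrite /winner big1 // => z _; by rewrite subrr mulr0 mul0r.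
  move=> H0; apply/eqP; apply/negPn/negP => Hxy.
  have [t t0 Ht] := KD_pos E w hE hw hconn hdeg lam hlam x y Hxy.
  by move: Ht; rewrite H0 lee_fin leNgt t0.
- by move=> x y; apply/le_anti; rewrite !Hsym.
- move=> x y z; apply: ge_ereal_sup => _ [f Hf <-].
  rewrite (winner_split _ _ _ x y z) EFinD; apply: leeD; apply: ereal_sup_ubound; by exists f.
Qed.
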